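(* Let $(A,\mathcal H)$ be a left bialgebroid such that ${}_s\mathcal H$ is $A$-flat. (1) If $I$ is a left ideal two-sided coideal in $\mathcal H$ and $B:=\mathcal H^{\mathrm{co}\,\mathcal H/I}$, then $B=\mathcal H^{\mathrm{co}\,\mathcal H/\mathcal HB^+}$. (2) If $B$ is a right $\mathcal H$-comodule $A^o$-subring of $\mathcal H$ via $t$ and $I:=\mathcal HB^+$, then $I=\mathcal H\big(\mathcal H^{\mathrm{co}\,\mathcal H/I}\big)^+$.
   Context: $\Bbbk$ is a field. For a $\Bbbk$-algebra $A$, $A^o$ is its opposite. A left bialgebroid $(A,\mathcal H)$ consists of $\Bbbk$-algebras $A,\mathcal H$, algebra maps $s:A\to\mathcal H$, $t:A^o\to\mathcal H$ with commuting images, and $A$-bilinear maps $\Delta:\mathcal H\to\mathcal H\otimes_A\mathcal H$, $\varepsilon:\mathcal H\to A$ for the bimodule structure $a\cdot h\cdot b=s(a)t(b)h$, where $\mathcal H\otimes_A\mathcal H$ is the quotient of $\mathcal H\otimes\mathcal H$ by the span of $t(a)x\otimes y-x\otimes s(a)y$; such that $(\mathcal H,\Delta,\varepsilon)$ is a coassociative counital $A$-coring, $\Delta$ takes values in $\{\sum_ix_i\otimes_Ay_i:\sum_ix_it(a)\otimes_Ay_i=\sum_ix_i\otimes_Ay_is(a)\ \forall a\}$ and is an algebra map into it (factorwise product), $\varepsilon(xs(\varepsilon(y)))=\varepsilon(xy)=\varepsilon(xt(\varepsilon(y)))$, $\varepsilon(1)=1$. Write $\Delta(x)=\sum x_1\otimes_Ax_2$;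 $\mathcal H^+=\ker\varepsilon$, $B^+=B\cap\mathcal H^+$. ''${}_s\mathcal H$ is $A$-flat'': $\mathcal H$ is flat as left $A$-module via $s$. A left ideal two-sided coideal is a left ideal $I$ with $\varepsilon(I)=0$ and $\Delta(I)\subseteq$ image of $I\otimes_A\mathcal H+\mathcal H\otimes_AI$. For such $I$ with projection $\pi$, $\mathcal H^{\mathrm{co}\,\mathcal H/I}=\{x:\sum\pi(x_1)\otimes_Ax_2=\pi(1)\otimes_Ax\text{ in }\mathcal H/I\otimes_A\mathcal H\}$. A right $\mathcal H$-comodule $A^o$-subring via $t$ is a subalgebra $B\supseteq t(A)$ with a coassociative counital right $A$-linear coaction $\delta:B\to B\otimes_A\mathcal H$ ($B$ a right $A$-module via $b\cdot a=t(a)b$, $\mathcal H$ left via $s$) such that $(\iota\otimes_A\mathcal H)\delta=\Delta\iota$, $\iota$ the inclusion. (For such $B$, $\mathcal HB^+$ is a left ideal two-sided coideal.) *)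

(* Defs.v *)
(* Tensor products over A (which MathComp does not provide) are
   given by their standard presentation: formal finite sums  sum_i m_i (x) n_i
   (lists of pairs) modulo the congruence generated by biadditivity and
   A-balancing (and, for a quotient M/Z, killing m (x) n for m in Z). *)
From HB Require Import structures.
From mathcomp Require Import all_boot all_algebra.
Set Implicit Arguments. Unset Strict Implicit. Unset Printing Implicit Defensive.
Import GRing.Theory.
Local Open Scope ring_scope.

(* Balanced tensor product  (P/Z) (x)_R N  of (the submodule P of) a right
   R-module M, modulo a submodule Z, with a left R-module N.
   tens_eq ract lact P Z s s'  <->  the formal sums s, s' (all of whose first
   components lie in P) are equal in (P/Z) (x)_R N.                           *)
Section Tensor.
Variables (R : nzRingType) (M N : zmodType).
Variables (ract : M -> R -> M) (lact : R -> N -> N).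
Variables (P : M -> Prop) (Z : M -> Prop).

Inductive tens_eq : seq (M * N) -> seq (M * N) -> Prop :=
| tens_refl s : tens_eq s s
| tens_sym s s' : tens_eq s s' -> tens_eq s' s
| tens_trans s1 s2 s3 : tens_eq s1 s2 -> tens_eq s2 s3 -> tens_eq s1 s3
| tens_cat s1 s2 s1' s2' :
    tens_eq s1 s1' -> tens_eq s2 s2' -> tens_eq (s1 ++ s2) (s1' ++ s2')
| tens_perm s s' : perm_eq s s' -> tens_eq s s'
| tens_zero n : tens_eq [:: (0, n)] [::]
| tens_addl m m' n : P m -> P m' ->
    tens_eq [:: (m + m', n)] [:: (m, n); (m', n)]
| tens_addr m n n' : P m -> tens_eq [:: (m, n + n')] [:: (m, n); (m, n')]
| tens_bal m a n : P m -> tens_eq [:: (ract m a, n)] [:: (m, lact a n)]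
| tens_kill m n : Z m -> tens_eq [:: (m, n)] [::].
End Tensor.

Section Tensor3.
Variables (R : nzRingType) (M N L : zmodType).
Variables (ractM : M -> R -> M) (lactN : R -> N -> N) (ractN : N -> R -> N)
          (lactL : R -> L -> L).
Variable (P : M -> Prop).

Inductive tens3_eq : seq (M * N * L) -> seq (M * N * L) -> Prop :=
| tens3_refl s : tens3_eq s s
| tens3_sym s s' : tens3_eq s s' -> tens3_eq s' s
| tens3_trans s1 s2 s3 : tens3_eq s1 s2 -> tens3_eq s2 s3 -> tens3_eq s1 s3
| tens3_cat s1 s2 s1' s2' :
    tens3_eq s1 s1' -> tens3_eq s2 s2' -> tens3_eq (s1 ++ s2) (s1' ++ s2')
| tens3_perm s s' : perm_eq s s' -> tens3_eq s s'
| tens3_zero n l : tens3_eq [:: (0, n, l)] [::]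
| tens3_add1 m m' n l : P m -> P m' ->
    tens3_eq [:: (m + m', n, l)] [:: (m, n, l); (m', n, l)]
| tens3_add2 m n n' l : P m ->
    tens3_eq [:: (m, n + n', l)] [:: (m, n, l); (m, n', l)]
| tens3_add3 m n l l' : P m ->
    tens3_eq [:: (m, n, l + l')] [:: (m, n, l); (m, n, l')]
| tens3_bal1 m a n l : P m ->
    tens3_eq [:: (ractM m a, n, l)] [:: (m, lactN a n, l)]
| tens3_bal2 m n a l : P m ->
    tens3_eq [:: (m, ractN n a, l)] [:: (m, n, lactL a l)].
End Tensor3.

Definition is_rmodule (R : nzRingType) (M : zmodType) (ract : M -> R -> M) :=
  [/\ forall x y a, ract (x + y) a = ract x a + ract y a,
      forall x a b, ract x (a + b) = ract x a + ract x b,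
      forall x a b, ract x (a * b) = ract (ract x a) b &
      forall x, ract x 1 = x].

Definition is_rsubmodule (R : nzRingType) (M : zmodType) (ract : M -> R -> M)
  (P : M -> Prop) :=
  [/\ P 0, forall x y, P x -> P y -> P (x - y) &
      forall x a, P x -> P (ract x a)].

(* N (with left action lact) is flat: for every right R-module M and every
   submodule P of M, the natural map P (x)_R N -> M (x)_R N is injective. *)
Definition flat_left (R : nzRingType) (N : zmodType) (lact : R -> N -> N) :=
  forall (M : zmodType) (ract : M -> R -> M), is_rmodule ract ->
  forall P : M -> Prop, is_rsubmodule ract P ->
  forall s : seq (M * N), (forall p, p \in s -> P p.1) ->
    tens_eq ract lact (fun _ => True) (fun _ => False) s [::] ->
    tens_eq ract lact P (fun _ => False) s [::].

(* The comultiplication Delta : H -> H (x)_A H is given by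
   a function D choosing a representative formal sum D x = [:: (x_1, x_2); ..]
   of Delta(x); all axioms are stated up to equality in the tensor product. *)
Section Bialgebroid.
Variables (k : fieldType) (A H : algType k).
Variables (s t : A -> H) (D : H -> seq (H * H)) (eps : H -> A).

(* bimodule structure a.h.b = s(a) t(b) h *)
Definition lactH (a : A) (h : H) : H := s a * h.
Definition ractH (h : H) (a : A) : H := t a * h.

Definition teqH := tens_eq ractH lactH (fun _ => True) (fun _ => False).
Definition teqH3 := tens3_eq ractH lactH ractH lactH (fun _ => True).

Definition left_bialgebroid :=
  [/\ (forall c a b, s (c *: a + b) = c *: s a + s b),
      (forall a b, s (a * b) = s a * s b) & s 1 = 1] /\
  [/\ (forall c a b, t (c *: a + b) = c *: t a + t b),
      (forall a b, t (a * b) = t b * t a), t 1 = 1 &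
      forall a b, s a * t b = t b * s a] /\
  [/\ (forall c x y, teqH (D (c *: x + y))
                          ([seq (c *: p.1, p.2) | p <- D x] ++ D y)),
      (forall a b h, teqH (D (s a * t b * h))
                          [seq (s a * p.1, t b * p.2) | p <- D h]),
      (forall c x y, eps (c *: x + y) = c *: eps x + eps y) &
      (forall a b h, eps (s a * t b * h) = a * eps h * b)] /\
  [/\ (forall x, teqH3
         (flatten [seq [seq (q.1, q.2, p.2) | q <- D p.1] | p <- D x])
         (flatten [seq [seq (p.1, q.1, q.2) | q <- D p.2] | p <- D x])),
      (forall x, \sum_(p <- D x) s (eps p.1) * p.2 = x),
      (forall x, \sum_(p <- D x) t (eps p.2) * p.1 = x),
  (* Delta lands in the Takeuchi product *)
      (forall x a, teqH [seq (p.1 * t a, p.2) | p <- D x]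
                        [seq (p.1, p.2 * s a) | p <- D x]) &
      (forall x y, teqH (D (x * y))
                        [seq (p.1 * q.1, p.2 * q.2) | p <- D x, q <- D y])] /\
  [/\ teqH (D 1) [:: (1, 1)],
      (forall x y, eps (x * s (eps y)) = eps (x * y)),
      (forall x y, eps (x * t (eps y)) = eps (x * y)) &
      eps 1 = 1].

Definition left_ideal_coideal (I : H -> Prop) :=
  [/\ I 0, (forall c x y, I x -> I y -> I (c *: x + y)),
      (forall h x, I x -> I (h * x)),
      (forall x, I x -> eps x = 0) &
      (forall x, I x -> exists l : seq (H * H),
          (forall p, p \in l -> I p.1 \/ I p.2) /\ teqH (D x) l)].

(* H^{co H/I}: x with  sum pi(x_1) (x) x_2 = pi(1) (x) x  in  H/I (x)_A H
   (H/I is a right A-module via pi(h).a = pi(t(a) h)). *)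
Definition coinv (I : H -> Prop) (x : H) : Prop :=
  tens_eq ractH lactH (fun _ => True) I (D x) [:: (1, x)].

Definition HBplus (B : H -> Prop) (x : H) : Prop :=
  exists l : seq (H * H), (forall p, p \in l -> B p.2 /\ eps p.2 = 0) /\
    x = \sum_(p <- l) p.1 * p.2.

(* right H-comodule A^o-subring via t, with coaction delta : B -> B (x)_A H
   (represented by delta : H -> seq (H * H), only used on B). *)
Definition comodule_subring (B : H -> Prop) (delta : H -> seq (H * H)) :=
  let teqB := tens_eq ractH lactH B (fun _ => False) in
  [/\
      B 1, (forall c x y, B x -> B y -> B (c *: x + y)),
      (forall x y, B x -> B y -> B (x * y)),
      (forall a, B (t a)) &
      (forall b, B b -> forall p, p \in delta b -> B p.1)] /\
  [/\
      (forall b b', B b -> B b' -> teqB (delta (b + b')) (delta b ++ delta b')),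
      (forall a b, B b -> teqB (delta (t a * b))
                               [seq (p.1, t a * p.2) | p <- delta b]),
      (forall b, B b -> tens3_eq ractH lactH ractH lactH B
         (flatten [seq [seq (q.1, q.2, p.2) | q <- delta p.1] | p <- delta b])
         (flatten [seq [seq (p.1, q.1, q.2) | q <- D p.2] | p <- delta b])),
      (forall b, B b -> \sum_(p <- delta b) t (eps p.2) * p.1 = b) &
      (forall b, B b -> teqH (delta b) (D b))].
End Bialgebroid.

(* Main.v *)
Require Import Defs.
From HB Require Import structures.
From mathcomp Require Import all_boot all_algebra zify.
From Stdlib Require Import ClassicalEpsilon FunctionalExtensionality PropExtensionality.
Set Implicit Arguments. Unset Strict Implicit. Unset Printing Implicit Defensive.
Import GRing.Theory.
Local Open Scope ring_scope.

Section Quot.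
Variables (T : choiceType) (R : T -> T -> Prop) (cat : T -> T -> T)
  (neg : T -> T) (nil : T).
Record qhyps := QHyps {
  qrefl : forall x, R x x;
  qsym : forall x y, R x y -> R y x;
  qtrans : forall x y z, R x y -> R y z -> R x z;
  qcat : forall x x' y y', R x x' -> R y y' -> R (cat x y) (cat x' y');
  qneg : forall x x', R x x' -> R (neg x) (neg x');
  qA : forall x y z, R (cat x (cat y z)) (cat (cat x y) z);
  qC : forall x y, R (cat x y) (cat y x);
  q0 : forall x, R (cat nil x) x;
  qN : forall x, R (cat (neg x) x) nil }.
Variable hq : qhyps.
Definition canon x := epsilon (inhabits nil) (R x).
Definition qT (_ : qhyps) := {x : T | canon x == x}.
HB.instance Definition _ := Choice.copy (qT hq) {x : T | canon x == x}.

Lemma canonP x : R x (canon x).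
Proof. by apply: epsilon_spec; exists x; apply: (qrefl hq). Qed.
Lemma canon_eq x y : R x y -> canon x = canon y.
Proof.
move=> Rxy; rewrite /canon; f_equal; apply: functional_extensionality => z.
apply: propositional_extensionality; split => H.
  exact: (qtrans hq (qsym hq Rxy) H).
exact: (qtrans hq Rxy H).
Qed.
Lemma canon_idem x : canon (canon x) == canon x.
Proof. by apply/eqP; apply: canon_eq; apply: qsym hq _ _ (canonP x). Qed.
Definition cl x : qT hq := exist _ (canon x) (canon_idem x).
Lemma clK (X : qT hq) : cl (val X) = X.
Proof. by apply: val_inj => /=; apply/eqP: (valP X). Qed.
Lemma cl_eq x y : cl x = cl y <-> R x y.
Proof.
split.
  move/(congr1 val) => /= e.
  apply: (qtrans hq (canonP x)); rewrite e; exact: (qsym hq (canonP y)).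
by move=> Rxy; apply: val_inj => /=; apply: canon_eq.
Qed.
Lemma valcl x : R (val (cl x)) x.
Proof. exact: (qsym hq (canonP x)). Qed.

Definition qadd (X Y : qT hq) := cl (cat (val X) (val Y)).
Definition qopp (X : qT hq) := cl (neg (val X)).
Definition qzero := cl nil.
Lemma qaddA : associative qadd.
Proof.
move=> X Y Z; apply/cl_eq.
apply: (qtrans hq (qcat hq (qrefl hq _) (valcl _))).
apply: (qtrans hq (qA hq _ _ _)).
exact: (qcat hq (qsym hq (valcl _)) (qrefl hq _)).
Qed.
Lemma qaddC : commutative qadd.
Proof. by move=> X Y; apply/cl_eq; apply: qC. Qed.
Lemma qadd0 : left_id qzero qadd.
Proof.
move=> X; rewrite -[RHS]clK; apply/cl_eq.
apply: (qtrans hq (qcat hq (valcl _) (qrefl hq _))); exact: q0.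
Qed.
Lemma qaddN : left_inverse qzero qopp qadd.
Proof.
move=> X; apply/cl_eq.
apply: (qtrans hq (qcat hq (valcl _) (qrefl hq _))); exact: qN.
Qed.
HB.instance Definition _ := GRing.isZmodule.Build (qT hq) qaddA qaddC qadd0 qaddN.

Lemma cl_cat x y : cl (cat x y) = cl x + cl y.
Proof.
apply/cl_eq; apply: qsym hq _ _ _.
exact: (qcat hq (valcl _) (valcl _)).
Qed.
Lemma cl_neg x : cl (neg x) = - cl x.
Proof. apply/cl_eq; apply: qsym hq _ _ _; exact: (qneg hq (valcl _)). Qed.
Lemma cl_nil : cl nil = 0.
Proof. by []. Qed.
End Quot.

Section TG.
Variables (R : nzRingType) (M N : zmodType) (ract : M -> R -> M) (lact : R -> N -> N).
Variables (P Z : M -> Prop).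
Local Notation teq := (tens_eq ract lact P Z).

Lemma teq_catl s1 s2 s : teq s1 s2 -> teq (s1 ++ s) (s2 ++ s).
Proof. by move=> h; apply: tens_cat h (tens_refl _ _ _ _ _). Qed.
Lemma teq_catr s1 s2 s : teq s1 s2 -> teq (s ++ s1) (s ++ s2).
Proof. by move=> h; apply: tens_cat (tens_refl _ _ _ _ _) h. Qed.
Lemma teq_cons p s1 s2 : teq s1 s2 -> teq (p :: s1) (p :: s2).
Proof. exact: (@teq_catr _ _ [:: p]). Qed.
Lemma teq_perm s1 s2 : perm_eq s1 s2 -> teq s1 s2.
Proof. exact: tens_perm. Qed.

Lemma teq_flat_pw (T : Type) (F G : T -> seq (M * N)) (u : seq T) :
  (forall p, teq (F p) (G p)) ->
  teq (flatten (map F u)) (flatten (map G u)).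
Proof.
move=> h; elim: u => [|p u IH] /=; first exact: tens_refl.
exact: tens_cat.
Qed.

Lemma teq_mono (Z' : M -> Prop) s s' : (forall m, Z m -> Z' m) ->
  teq s s' -> tens_eq ract lact P Z' s s'.
Proof.
move=> hZ; elim=> {s s'}.
- by move=> s; apply: tens_refl.
- by move=> s s' _ h; apply: tens_sym.
- by move=> s1 s2 s3 _ h1 _ h2; apply: tens_trans h1 h2.
- by move=> s1 s2 s1' s2' _ h1 _ h2; apply: tens_cat.
- by move=> s s' h; apply: tens_perm.
- by move=> n; apply: tens_zero.
- by move=> m m' n hm hm'; apply: tens_addl.
- by move=> m n n' hm; apply: tens_addr.
- by move=> m a n hm; apply: tens_bal.
- by move=> m n hm; apply: tens_kill; apply: hZ.
Qed.

Section Transport.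
Variables (M' N' : zmodType) (ract' : M' -> R -> M') (lact' : R -> N' -> N').
Variables (P' Z' : M' -> Prop) (Phi : M * N -> seq (M' * N')).
Local Notation teq' := (tens_eq ract' lact' P' Z').
Hypotheses
  (Hz : forall n, teq' (Phi (0, n)) [::])
  (Hl : forall m m' n, P m -> P m' -> teq' (Phi (m + m', n)) (Phi (m, n) ++ Phi (m', n)))
  (Hr : forall m n n', P m -> teq' (Phi (m, n + n')) (Phi (m, n) ++ Phi (m, n')))
  (Hb : forall m a n, P m -> teq' (Phi (ract m a, n)) (Phi (m, lact a n)))
  (Hk : forall m n, Z m -> teq' (Phi (m, n)) [::]).

Lemma teq_transport s s' : teq s s' ->
  teq' (flatten (map Phi s)) (flatten (map Phi s')).
Proof.
elim=> {s s'}.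
- by move=> s; apply: tens_refl.
- by move=> s s' _ h; apply: tens_sym.
- by move=> s1 s2 s3 _ h1 _ h2; apply: tens_trans h1 h2.
- by move=> s1 s2 s1' s2' _ h1 _ h2; rewrite !map_cat !flatten_cat; apply: tens_cat.
- by move=> s s' h; apply: tens_perm; apply: perm_flatten; apply: perm_map.
- by move=> n /=; rewrite cats0; apply: Hz.
- by move=> m m' n hm hm' /=; rewrite !cats0; apply: Hl.
- by move=> m n n' hm /=; rewrite !cats0; apply: Hr.
- by move=> m a n hm /=; rewrite !cats0; apply: Hb.
- by move=> m n hm /=; rewrite cats0; apply: Hk.
Qed.
End Transport.

Section Eval.
Variables (V : zmodType) (IV : V -> Prop) (F : M -> N -> V).
Hypotheses (IV0 : IV 0) (IVB : forall x y, IV x -> IV y -> IV (x - y)).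
Hypotheses
  (F0 : forall n, F 0 n = 0)
  (Fl : forall m m' n, P m -> P m' -> F (m + m') n = F m n + F m' n)
  (Fr : forall m n n', P m -> F m (n + n') = F m n + F m n')
  (Fb : forall m a n, P m -> F (ract m a) n = F m (lact a n))
  (Fk : forall m n, Z m -> IV (F m n)).

Lemma IVD x y : IV x -> IV y -> IV (x + y).
Proof.
move=> hx hy; have h0y : IV (- y) by rewrite -sub0r; apply: IVB.
by rewrite -[y]opprK; apply: IVB.
Qed.

Lemma teq_eval s s' : teq s s' ->
  IV (\sum_(p <- s) F p.1 p.2 - \sum_(p <- s') F p.1 p.2).
Proof.
elim=> {s s'}.
- by move=> s; rewrite subrr.
- move=> s s' _ h; rewrite -opprB -sub0r; exact: IVB.
- move=> s1 s2 s3 _ h1 _ h2.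
  have -> : \sum_(p <- s1) F p.1 p.2 - \sum_(p <- s3) F p.1 p.2 =
    (\sum_(p <- s1) F p.1 p.2 - \sum_(p <- s2) F p.1 p.2) +
    (\sum_(p <- s2) F p.1 p.2 - \sum_(p <- s3) F p.1 p.2).
    by rewrite addrA subrK.
  exact: IVD.
- move=> s1 s2 s1' s2' _ h1 _ h2; rewrite !big_cat /=.
  rewrite opprD addrACA; exact: IVD.
- by move=> s s' h; rewrite (perm_big _ h) /= subrr.
- by move=> n; rewrite big_seq1 big_nil F0 subrr.
- move=> m m' n hm hm'; rewrite !big_cons !big_nil /= Fl // !addr0 subrr //.
- move=> m n n' hm; rewrite !big_cons !big_nil /= Fr // !addr0 subrr //.
- by move=> m a n hm; rewrite !big_seq1 /= Fb // subrr.
- by move=> m n hm; rewrite big_seq1 big_nil subr0; apply: Fk.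
Qed.
End Eval.
End TG.

Section TG3.
Variables (R : nzRingType) (M N L : zmodType).
Variables (ractM : M -> R -> M) (lactN : R -> N -> N) (ractN : N -> R -> N)
          (lactL : R -> L -> L) (P3 : M -> Prop).
Variables (M' N' : zmodType) (ract' : M' -> R -> M') (lact' : R -> N' -> N').
Variables (P' Z' : M' -> Prop) (Phi : M * N * L -> seq (M' * N')).
Local Notation teq' := (tens_eq ract' lact' P' Z').
Hypotheses
  (Hz : forall n l, teq' (Phi (0, n, l)) [::])
  (H1 : forall m m' n l, P3 m -> P3 m' ->
     teq' (Phi (m + m', n, l)) (Phi (m, n, l) ++ Phi (m', n, l)))
  (H2 : forall m n n' l, P3 m ->
     teq' (Phi (m, n + n', l)) (Phi (m, n, l) ++ Phi (m, n', l)))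
  (H3 : forall m n l l', P3 m ->
     teq' (Phi (m, n, l + l')) (Phi (m, n, l) ++ Phi (m, n, l')))
  (Hb1 : forall m a n l, P3 m -> teq' (Phi (ractM m a, n, l)) (Phi (m, lactN a n, l)))
  (Hb2 : forall m n a l, P3 m -> teq' (Phi (m, ractN n a, l)) (Phi (m, n, lactL a l))).

Lemma teq3_transport s s' : tens3_eq ractM lactN ractN lactL P3 s s' ->
  teq' (flatten (map Phi s)) (flatten (map Phi s')).
Proof.
elim=> {s s'}.
- by move=> s; apply: tens_refl.
- by move=> s s' _ h; apply: tens_sym.
- by move=> s1 s2 s3 _ h1 _ h2; apply: tens_trans h1 h2.
- by move=> s1 s2 s1' s2' _ h1 _ h2; rewrite !map_cat !flatten_cat; apply: tens_cat.
- by move=> s s' h; apply: tens_perm; apply: perm_flatten; apply: perm_map.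
- by move=> n l /=; rewrite cats0; apply: Hz.
- by move=> m m' n l hm hm' /=; rewrite !cats0; apply: H1.
- by move=> m n n' l hm /=; rewrite !cats0; apply: H2.
- by move=> m n l l' hm /=; rewrite !cats0; apply: H3.
- by move=> m a n l hm /=; rewrite !cats0; apply: Hb1.
- by move=> m n a l hm /=; rewrite !cats0; apply: Hb2.
Qed.
End TG3.

Lemma perm_mid (T : eqType) (p q : T) (u v : seq T) :
  perm_eq ((p :: u) ++ q :: v) ([:: p; q] ++ u ++ v).
Proof. by rewrite /= perm_cons -cat1s perm_catCA. Qed.

Lemma pcC (T : eqType) (s1 s2 : seq T) : perm_eq (s1 ++ s2) (s2 ++ s1).
Proof. exact: permEl (perm_catC s1 s2). Qed.

Section TT.
Variables (R : nzRingType) (M N : zmodType) (ract : M -> R -> M) (lact : R -> N -> N).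
Variables (Z : M -> Prop).
Local Notation teq := (tens_eq ract lact (fun _ => True) Z).
Definition negl (u : seq (M * N)) := [seq (- p.1, p.2) | p <- u].

Lemma teq_neg m n : teq [:: (m, n); (- m, n)] [::].
Proof.
have h := @tens_addl _ _ _ ract lact (fun _ => True) Z m (- m) n I I.
rewrite subrr in h; apply: tens_trans (tens_sym h) _; exact: tens_zero.
Qed.

Lemma teq_negl u : teq (u ++ negl u) [::].
Proof.
elim: u => [|p u IH] /=; first exact: tens_refl.
apply: tens_trans (tens_perm _ _ _ _ (perm_mid _ _ _ _)) _.
rewrite -[[::]]/([::] ++ [::]); apply: tens_cat IH.
by case: p => m n; apply: teq_neg.
Qed.

Lemma teq_cancel s s' u : teq (s ++ u) (s' ++ u) -> teq s s'.
Proof.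
move=> h.
have e : forall s0, teq s0 ((s0 ++ u) ++ negl u).
  move=> s0; rewrite -catA -{1}[s0]cats0; apply: teq_catr.
  exact: tens_sym (teq_negl u).
apply: tens_trans (e s) _; apply: tens_trans (tens_sym (e s')).
exact: teq_catl.
Qed.

Lemma teq_cancell s s' u : teq (u ++ s) (u ++ s') -> teq s s'.
Proof.
move=> h; apply: (@teq_cancel _ _ u).
apply: tens_trans (tens_perm _ _ _ _ (pcC _ _)) _.
apply: tens_trans h _; exact: tens_perm _ _ _ _ (pcC _ _).
Qed.

Lemma teq_r0 m : teq [:: (m, 0)] [::].
Proof.
have h := @tens_addr _ _ _ ract lact (fun _ => True) Z m 0 0 I.
rewrite addr0 in h.
by apply: (@teq_cancel _ _ [:: (m, 0)]); apply: tens_sym.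
Qed.

Lemma teq_negswap m n : teq [:: (- m, n)] [:: (m, - n)].
Proof.
apply: (@teq_cancell _ _ [:: (m, n)]) => /=.
apply: tens_trans (teq_neg m n) _.
apply: tens_sym; apply: tens_trans (tens_perm _ _ _ _ (pcC [:: (m, n)] [:: (m, - n)])) _.
have h := @tens_addr _ _ _ ract lact (fun _ => True) Z m (- n) n I.
rewrite addNr in h; apply: tens_trans (tens_sym h) _; exact: teq_r0.
Qed.

Lemma teq_sumr (T : Type) m (F : T -> N) u :
  teq [seq (m, F p) | p <- u] [:: (m, \sum_(p <- u) F p)].
Proof.
elim: u => [|p u IH] /=; first by rewrite big_nil; apply: tens_sym; apply: teq_r0.
rewrite big_cons; apply: tens_trans (teq_cons _ IH) _.
apply: tens_sym; exact: tens_addr.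
Qed.

Lemma teq_map_split (T : Type) (f g h : T -> M * N) u :
  (forall p, teq [:: f p] [:: g p; h p]) ->
  teq (map f u) (map g u ++ map h u).
Proof.
move=> H; elim: u => [|p u IH] /=; first exact: tens_refl.
apply: tens_trans (tens_cat (H p) IH) _.
apply: teq_perm; rewrite perm_sym; exact: perm_mid.
Qed.

Lemma teq_zero_map (T : Type) (g : T -> M * N) u :
  (forall p, (g p).1 = 0) -> teq (map g u) [::].
Proof.
move=> H; elim: u => [|p u IH] /=; first exact: tens_refl.
rewrite -[[::]]/([::] ++ [::]) -cat1s; apply: tens_cat IH.
by rewrite [g p]surjective_pairing H; apply: tens_zero.
Qed.

Lemma teq_subkill x y n : Z (x - y) -> teq [:: (x, n)] [:: (y, n)].
Proof.
move=> hz.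
have h := @tens_addl _ _ _ ract lact (fun _ => True) Z y (x - y) n I I.
rewrite addrC subrK in h; apply: tens_trans h _.
have k := teq_catr [:: (y, n)] (tens_kill ract lact (fun _ => True) (m:=x-y) n hz).
by rewrite cats0 in k.
Qed.
End TT.

Lemma flatten_map1 (T U : Type) (f : T -> U) (u : seq T) :
  flatten [seq [:: f x] | x <- u] = map f u.
Proof. by elim: u => //= x u ->. Qed.

Section Bialg.
Variables (k : fieldType) (A H : algType k) (s t : A -> H)
  (D : H -> seq (H * H)) (eps : H -> A).
Hypothesis Hb : left_bialgebroid s t D eps.
Local Notation teqZ Z := (tens_eq (ractH t) (lactH s) (fun _ => True) Z).

Lemma sD a b : s (a + b) = s a + s b.
Proof. by case: Hb => [[sl _ _] _]; have := sl 1 a b; rewrite !scale1r. Qed.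
Lemma sM a b : s (a * b) = s a * s b.
Proof. by case: Hb => [[_ sm _] _]. Qed.
Lemma s1 : s 1 = 1.
Proof. by case: Hb => [[_ _ ->] _]. Qed.
Lemma s0 : s 0 = 0.
Proof. have h := sD 0 0; rewrite addr0 in h; by apply: (addrI (s 0)); rewrite -h addr0. Qed.
Lemma tD a b : t (a + b) = t a + t b.
Proof. by case: Hb => [_ [[tl _ _ _] _]]; have := tl 1 a b; rewrite !scale1r. Qed.
Lemma tM a b : t (a * b) = t b * t a.
Proof. by case: Hb => [_ [[_ tm _ _] _]]. Qed.
Lemma t1 : t 1 = 1.
Proof. by case: Hb => [_ [[_ _ -> _] _]]. Qed.
Lemma stC a b : s a * t b = t b * s a.
Proof. by case: Hb => [_ [[_ _ _ ->] _]]. Qed.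
Lemma t0 : t 0 = 0.
Proof. have h := tD 0 0; rewrite addr0 in h; by apply: (addrI (t 0)); rewrite -h addr0. Qed.
Lemma D_lin c x y : teqZ (fun _ => False) (D (c *: x + y))
  ([seq (c *: p.1, p.2) | p <- D x] ++ D y).
Proof. by case: Hb => [_ [_ [[hh _ _ _] _]]]; apply: hh. Qed.
Lemma D_st a b h : teqZ (fun _ => False) (D (s a * t b * h))
  [seq (s a * p.1, t b * p.2) | p <- D h].
Proof. by case: Hb => [_ [_ [[_ hh _ _] _]]]; apply: hh. Qed.
Lemma epsD x y : eps (x + y) = eps x + eps y.
Proof. by case: Hb => [_ [_ [[_ _ el _] _]]]; have := el 1 x y; rewrite !scale1r. Qed.
Lemma eps_st a b h : eps (s a * t b * h) = a * eps h * b.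
Proof. by case: Hb => [_ [_ [[_ _ _ ->] _]]]. Qed.
Lemma coass x : teqH3 s t
  (flatten [seq [seq (q.1, q.2, p.2) | q <- D p.1] | p <- D x])
  (flatten [seq [seq (p.1, q.1, q.2) | q <- D p.2] | p <- D x]).
Proof. by case: Hb => [_ [_ [_ [[hh _ _ _ _] _]]]]; apply: hh. Qed.
Lemma counitl x : \sum_(p <- D x) s (eps p.1) * p.2 = x.
Proof. by case: Hb => [_ [_ [_ [[_ -> _ _ _] _]]]]. Qed.
Lemma counitr x : \sum_(p <- D x) t (eps p.2) * p.1 = x.
Proof. by case: Hb => [_ [_ [_ [[_ _ -> _ _] _]]]]. Qed.
Lemma D1 : teqZ (fun _ => False) (D 1) [:: (1, 1)].
Proof. by case: Hb => [_ [_ [_ [_ [hh _ _ _]]]]]; apply: hh. Qed.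
Lemma eps1 : eps 1 = 1.
Proof. by case: Hb => [_ [_ [_ [_ [_ _ _ ->]]]]]. Qed.

Lemma eps0 : eps 0 = 0.
Proof. have h := epsD 0 0; rewrite addr0 in h; by apply: (addrI (eps 0)); rewrite -h addr0. Qed.
Lemma epsN x : eps (- x) = - eps x.
Proof. by apply/eqP; rewrite -subr_eq0 opprK -epsD addNr eps0. Qed.
Lemma epsB x y : eps (x - y) = eps x - eps y.
Proof. by rewrite epsD epsN. Qed.
Lemma eps_t b h : eps (t b * h) = eps h * b.
Proof. by have := eps_st 1 b h; rewrite s1 mul1r mul1r. Qed.
Lemma eps_s a h : eps (s a * h) = a * eps h.
Proof. by have := eps_st a 1 h; rewrite t1 mulr1 mulr1. Qed.
Lemma eps_tA b : eps (t b) = b.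
Proof. by have := eps_t b 1; rewrite mulr1 eps1 mul1r. Qed.
Lemma sN a : s (- a) = - s a.
Proof. by apply/eqP; rewrite -subr_eq0 opprK -sD addNr s0. Qed.
Lemma tN a : t (- a) = - t a.
Proof. by apply/eqP; rewrite -subr_eq0 opprK -tD addNr t0. Qed.

Lemma map_id2 (u : seq (H * H)) : [seq (1 *: p.1, p.2) | p <- u] = u.
Proof. by elim: u => [|[a b] u IH] //=; rewrite scale1r IH. Qed.

Lemma D_add x y : teqZ (fun _ => False) (D (x + y)) (D x ++ D y).
Proof. by have := D_lin 1 x y; rewrite scale1r map_id2. Qed.
Lemma D_sub x y : teqZ (fun _ => False) (D (x - y)) (negl (D y) ++ D x).
Proof.
have := D_lin (-1) y x; rewrite scaleN1r addrC.
by have -> : [seq (-1 *: p.1, p.2) | p <- D y] = negl (D y)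
  by rewrite /negl; apply: eq_map => p; rewrite scaleN1r.
Qed.
Lemma D_t a x : teqZ (fun _ => False) (D (t a * x)) [seq (p.1, t a * p.2) | p <- D x].
Proof.
have := D_st 1 a x; rewrite s1 mul1r.
by have -> : [seq (1 * p.1, t a * p.2) | p <- D x] = [seq (p.1, t a * p.2) | p <- D x]
  by apply: eq_map => p; rewrite mul1r.
Qed.
Lemma D_s a x : teqZ (fun _ => False) (D (s a * x)) [seq (s a * p.1, p.2) | p <- D x].
Proof.
have := D_st a 1 x; rewrite t1 mulr1.
by have -> : [seq (s a * p.1, 1 * p.2) | p <- D x] = [seq (s a * p.1, p.2) | p <- D x]
  by apply: eq_map => p; rewrite mul1r.
Qed.

Lemma teqH_act Z a u u' : teqZ Z u u' ->
  teqZ Z [seq (p.1, t a * p.2) | p <- u] [seq (p.1, t a * p.2) | p <- u'].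
Proof.
move=> h; rewrite -!(flatten_map1 (fun p : H * H => (p.1, t a * p.2))).
apply: (teq_transport (Phi := fun p : H * H => [:: (p.1, t a * p.2)])) h => /=.
- by move=> n; apply: tens_zero.
- by move=> m m' n _ _; apply: tens_addl.
- by move=> m n n' _; rewrite mulrDr; apply: tens_addr.
- move=> m b n _; rewrite /ractH /lactH mulrA -stC -mulrA.
  exact: (tens_bal _ _ (P:=fun _ => True) Z (m:=m) b (t a * n) I).
- by move=> m n hm; apply: tens_kill.
Qed.

Lemma teqH_neg Z u u' : (forall m, Z m -> Z (- m)) -> teqZ Z u u' ->
  teqZ Z (negl u) (negl u').
Proof.
move=> hZ h; rewrite /negl -!(flatten_map1 (fun p : H * H => (- p.1, p.2))).
apply: (teq_transport (Phi := fun p : H * H => [:: (- p.1, p.2)])) h => /=.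
- by move=> n; rewrite oppr0; apply: tens_zero.
- by move=> m m' n _ _; rewrite opprD; apply: tens_addl.
- by move=> m n n' _; apply: tens_addr.
- move=> m b n _; rewrite /ractH /lactH -mulrN.
  exact: (tens_bal _ _ (P:=fun _ => True) Z (m:=-m) b n I).
- by move=> m n hm; apply: tens_kill; apply: hZ.
Qed.

Lemma bal1 Z c y : teqZ Z [:: (t c, y)] [:: (1, s c * y)].
Proof.
have h := tens_bal (ractH t) (lactH s) (P:=fun _ => True) Z (m:=1) c y I.
by rewrite /ractH mulr1 in h.
Qed.

Lemma Kc Z c y : Z (c - t (eps c)) -> teqZ Z [:: (c, y)] [:: (1, s (eps c) * y)].
Proof. by move=> hz; apply: tens_trans (teq_subkill _ _ _ hz) (bal1 _ _ _). Qed.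

Lemma teq_map_pw Z (f : H * H -> H * H) u :
  (forall p, p \in u -> teqZ Z [:: p] [:: f p]) -> teqZ Z u (map f u).
Proof.
elim: u => [|p u IH] hp /=; first exact: tens_refl.
rewrite -cat1s -[f p :: _]cat1s; apply: tens_cat.
  by apply: hp; rewrite mem_head.
by apply: IH => q hq; apply: hp; rewrite inE hq orbT.
Qed.

Lemma Kerl (Z : H -> Prop) b :
  Z 0 -> (forall x y, Z x -> Z y -> Z (x - y)) ->
  (forall a x, Z x -> Z (t a * x)) ->
  coinv s t D Z b -> eps b = 0 -> Z b.
Proof.
move=> Z0 ZB Zt hb e.
have := teq_eval (IV := Z) (F := fun m n => t (eps n) * m) Z0 ZB _ _ _ _ _ hb.
rewrite counitr big_seq1 /= e t0 mul0r subr0; apply.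
- by move=> n; rewrite mulr0.
- by move=> m m' n _ _; rewrite mulrDr.
- by move=> m n n' _; rewrite epsD tD mulrDl.
- by move=> m a n _; rewrite /ractH /lactH eps_s tM mulrA.
- by move=> m n hm; apply: Zt.
Qed.

Lemma counit_eval u u' : teqZ (fun _ => False) u u' ->
  \sum_(p <- u) s (eps p.1) * p.2 = \sum_(p <- u') s (eps p.1) * p.2.
Proof.
move=> h; apply/eqP; rewrite -subr_eq0; apply/eqP.
apply: (teq_eval (IV := fun v : H => v = 0) (F := fun m n => s (eps m) * n)) h.
- done.
- by move=> x y -> ->; rewrite subrr.
- by move=> n; rewrite eps0 s0 mul0r.
- by move=> m m' n _ _; rewrite epsD sD mulrDl.
- by move=> m n n' _; rewrite mulrDr.
- by move=> m a n _; rewrite /ractH /lactH eps_t sM mulrA.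
- by [].
Qed.

Section HBp.
Variable Bp : H -> Prop.
Lemma HBp0 : HBplus eps Bp 0.
Proof. by exists [::]; split => //; rewrite big_nil. Qed.
Lemma HBpB x y : HBplus eps Bp x -> HBplus eps Bp y -> HBplus eps Bp (x - y).
Proof.
move=> [l1 [h1 ->]] [l2 [h2 ->]].
exists (l1 ++ [seq (- p.1, p.2) | p <- l2]); split.
  move=> p; rewrite mem_cat => /orP[/h1 //|/mapP[q /h2 hq ->]] //.
rewrite big_cat big_map /= -sumrN; congr (_ + _).
by apply: eq_bigr => p _; rewrite mulNr.
Qed.
Lemma HBpM h x : HBplus eps Bp x -> HBplus eps Bp (h * x).
Proof.
move=> [l [hl ->]]; exists [seq (h * p.1, p.2) | p <- l]; split.
  by move=> p /mapP[q /hl hq ->].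
by rewrite big_map mulr_sumr; apply: eq_bigr => p _; rewrite mulrA.
Qed.
Lemma HBpD x y : HBplus eps Bp x -> HBplus eps Bp y -> HBplus eps Bp (x + y).
Proof.
move=> hx hy; rewrite -[y]opprK; apply: HBpB hx _.
by rewrite -sub0r; apply: HBpB HBp0 hy.
Qed.
Lemma HBp_in x : Bp x -> eps x = 0 -> HBplus eps Bp x.
Proof.
move=> hx e; exists [:: (1, x)]; split; last by rewrite big_seq1 mul1r.
by move=> p; rewrite inE => /eqP -> /=.
Qed.
Lemma HBp_sub (Z : H -> Prop) x : Z 0 -> (forall x y, Z x -> Z y -> Z (x + y)) ->
  (forall h x, Z x -> Z (h * x)) ->
  (forall b, Bp b -> eps b = 0 -> Z b) -> HBplus eps Bp x -> Z x.
Proof.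
move=> Z0 ZD ZM hB [l [hl ->]]; elim: l hl => [|p l IH] hl; first by rewrite big_nil.
rewrite big_cons; apply: ZD; last by apply: IH => q hq; apply: hl; rewrite inE hq orbT.
have [h1 h2] := hl p (mem_head _ _); exact: ZM (hB _ h1 h2).
Qed.
End HBp.

Lemma part2 (B : H -> Prop) (delta : H -> seq (H * H)) :
  comodule_subring s t D eps B delta ->
  forall x : H, HBplus eps B x <-> HBplus eps (coinv s t D (HBplus eps B)) x.
Proof.
move=> [[_ Blin _ Bt Bdel] [_ _ _ _ Bdl]] x.
set Ip := HBplus eps B.
have coinvB : forall b, B b -> coinv s t D Ip b.
  move=> b hb; rewrite /coinv.
  have h1 := teq_mono (Z' := Ip) (fun m (f : False) => match f with end) (Bdl b hb).
  apply: tens_trans (tens_sym h1) _.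
  apply: tens_trans (teq_map_pw (f := fun p => (1, s (eps p.1) * p.2)) _) _.
    move=> [c y] hp; apply: Kc; apply: HBp_in.
      by rewrite -scaleN1r addrC; apply: Blin; [exact: Bt | exact: (Bdel b hb _ hp)].
    by rewrite epsB eps_tA subrr.
  apply: tens_trans (teq_sumr _ _ _ _ _ _) _.
  by rewrite (counit_eval (Bdl b hb)) counitl; apply: tens_refl.
split.
  move=> [l [hl ->]]; exists l; split => // p /hl [h1 h2]; split => //.
  exact: coinvB.
apply: HBp_sub.
- exact: HBp0.
- exact: HBpD.
- exact: HBpM.
- move=> b hb e; apply: Kerl hb e.
  + exact: HBp0.
  + exact: HBpB.
  + move=> a y; exact: HBpM.
Qed.
End Bialg.

Lemma teq_negcancel (R : nzRingType) (M N : zmodType) (ract : M -> R -> M)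
  (lact : R -> N -> N) Z u m n :
  tens_eq ract lact (fun _ => True) Z (u ++ [:: (- m, n)]) [::] <->
  tens_eq ract lact (fun _ => True) Z u [:: (m, n)].
Proof.
split=> h.
  apply: (@teq_cancel _ _ _ _ _ _ _ _ [:: (- m, n)]).
  by apply: tens_trans h _; apply: tens_sym; apply: teq_neg.
apply: tens_trans (teq_catl _ h) _; exact: teq_neg.
Qed.

Section Part1.
Variables (k : fieldType) (A H : algType k) (s t : A -> H)
  (D : H -> seq (H * H)) (eps : H -> A).
Hypothesis Hb : left_bialgebroid s t D eps.
Variable I : H -> Prop.
Hypothesis HI : left_ideal_coideal s t D eps I.
Local Notation teqZ Z := (tens_eq (ractH t) (lactH s) (fun _ => True) Z).
Local Notation Bc := (coinv s t D I).

Lemma I0 : I 0. Proof. by case: HI. Qed.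
Lemma Isub x y : I x -> I y -> I (x - y).
Proof. by case: HI => _ hl _ _ _ hx hy; have := hl (-1) y x hy hx; rewrite scaleN1r addrC. Qed.
Lemma Ineg x : I x -> I (- x).
Proof. by move=> hx; rewrite -sub0r; apply: Isub I0 hx. Qed.
Lemma Imul h x : I x -> I (h * x).
Proof. by case: HI => _ _ hm _ _; apply: hm. Qed.
Lemma Iadd x y : I x -> I y -> I (x + y).
Proof. by move=> hx hy; rewrite -[y]opprK; apply: Isub hx (Ineg hy). Qed.

Lemma Ffalse Z : forall m : H, False -> Z m.
Proof. by []. Qed.

Lemma Bc_t a : Bc (t a).
Proof.
rewrite /coinv -[t a]mulr1; apply: (teq_mono (Ffalse I)).
apply: tens_trans (D_t Hb _ _) _.
have := teqH_act Hb a (D1 Hb); rewrite /= => h; exact: h.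
Qed.

Lemma Bc_sub x y : Bc x -> Bc y -> Bc (x - y).
Proof.
move=> hx hy; rewrite /coinv.
apply: tens_trans (teq_mono (Ffalse I) (D_sub Hb x y)) _.
apply: tens_trans (tens_cat (teqH_neg Ineg hy) hx) _ => /=.
apply: tens_trans (tens_cat (teq_negswap _ _ _ 1 y) (tens_refl _ _ _ _ [:: (1, x)])) _.
apply: tens_trans (tens_perm _ _ _ _ (pcC _ _)) _ => /=.
apply: tens_sym; exact: tens_addr.
Qed.

Lemma hq_proof : qhyps (teqZ I) (@cat (H * H)) (@negl H H) [::].
Proof.
split.
- by move=> x; apply: tens_refl.
- by move=> x y h; apply: tens_sym.
- by move=> x y z; apply: tens_trans.
- by move=> x x' y y'; apply: tens_cat.
- by move=> x x'; apply: teqH_neg Ineg.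
- by move=> x y z; rewrite catA; apply: tens_refl.
- by move=> x y; apply: tens_perm; apply: pcC.
- by move=> x; apply: tens_refl.
- by move=> x; apply: tens_trans (tens_perm _ _ _ _ (pcC _ _)) (teq_negl _ _ _ _).
Qed.

Local Notation M := (qT hq_proof).
Local Notation cl := (cl hq_proof).
Lemma addME (X Y : M) : X + Y = cl (val X ++ val Y).
Proof. by []. Qed.

Lemma clE u v : teqZ I u v -> cl u = cl v.
Proof. exact: (proj2 (cl_eq hq_proof u v)). Qed.
Lemma clR u v : cl u = cl v -> teqZ I u v.
Proof. exact: (proj1 (cl_eq hq_proof u v)). Qed.

Definition actL a (u : seq (H * H)) := [seq (p.1, t a * p.2) | p <- u].
Definition ractM (X : M) (a : A) : M := cl (actL a (val X)).

Lemma ractM_mod : is_rmodule ractM.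
Proof.
split.
- move=> X Y a; rewrite /ractM !addME; apply: clE; rewrite /actL.
  apply: tens_trans (teqH_act Hb a (valcl _ _)) _; rewrite map_cat.
  by apply: tens_sym; apply: tens_cat; apply: valcl.
- move=> X a b; rewrite /ractM addME; apply: clE.
  apply: tens_trans _ (tens_sym (tens_cat (valcl _ _) (valcl _ _))).
  rewrite /actL; apply: teq_map_split => p; rewrite (tD Hb) mulrDl; by apply: tens_addr.
- move=> X a b; rewrite /ractM; apply: clE; apply: tens_sym; rewrite /actL.
  apply: tens_trans (teqH_act Hb b (valcl _ _)) _; rewrite -map_comp.
  have -> : [seq ((fun p : H * H => (p.1, t b * p.2)) \o (fun p => (p.1, t a * p.2))) i
    | i <- val X] = [seq (p.1, t (a * b) * p.2) | p <- val X].
    by apply: eq_map => p; rewrite /= (tM Hb) mulrA.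
  exact: tens_refl.
- move=> X; rewrite /ractM /actL (t1 Hb).
  have -> : [seq (p.1, 1 * p.2) | p <- val X] = val X.
    by elim: (val X) => [|[a b] u IH] //=; rewrite mul1r IH.
  exact: clK.
Qed.

Definition f (x : H) : M := cl (D x ++ [:: (-1, x)]).

Lemma f_zero x : f x = 0 <-> Bc x.
Proof.
rewrite -(cl_nil hq_proof) /f cl_eq; exact: teq_negcancel.
Qed.

Lemma fB x y : f (x - y) = f x - f y.
Proof.
rewrite /f -(cl_neg hq_proof) -(cl_cat hq_proof); apply: clE.
apply: tens_trans (tens_cat (teq_mono (Ffalse I) (D_sub Hb x y))
   (tens_refl _ _ _ _ [:: (-1, x - y)])) _.
have e1 : teqZ I [:: (-1, x - y)] [:: (-1, x); (1, y)].
  apply: tens_trans (tens_addr _ _ _ _ _ _) _ => //.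
  apply: teq_cons; have := teq_negswap (ractH t) (lactH s) I (-1) y.
  rewrite opprK => h; exact: tens_sym h.
apply: tens_trans (teq_catr _ e1) _.
rewrite /negl map_cat /= opprK; apply: tens_perm.
apply/permP => q; rewrite !count_cat /=.
  move: (count q _) (count q _) (q _) (q _) => a1 a2 b1 b2; lia.
Qed.

Lemma f_t a x : f (t a * x) = ractM (f x) a.
Proof.
rewrite /ractM /f; apply: clE.
apply: tens_trans _ (tens_sym (teqH_act Hb a (valcl _ _))); rewrite map_cat /=.
exact: tens_cat (teq_mono (Ffalse I) (D_t Hb a x)) (tens_refl _ _ _ _ _).
Qed.

Lemma f0 : f 0 = 0.
Proof. by have h := fB 0 0; rewrite !subrr in h. Qed.
Lemma fN y : f (- y) = - f y.
Proof. by rewrite -sub0r fB f0 sub0r. Qed.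
Lemma fD x y : f (x + y) = f x + f y.
Proof. by rewrite -{1}[y]opprK fB fN opprK. Qed.

Definition Pf (y : M) := exists x, y = f x.
Lemma Pf_sub : is_rsubmodule ractM Pf.
Proof.
split.
- by exists 0; rewrite f0.
- by move=> _ _ [x ->] [y ->]; exists (x - y); rewrite fB.
- by move=> _ a [x ->]; exists (t a * x); rewrite f_t.
Qed.

Definition clp x y : M := cl [:: (x, y)].
Local Notation teqM := (tens_eq ractM (lactH s) (fun _ => True) (fun _ : M => False)).

Lemma clp0 y : clp 0 y = 0.
Proof. rewrite /clp -(cl_nil hq_proof); apply: clE; exact: tens_zero. Qed.
Lemma clp_r0 x : clp x 0 = 0.
Proof. rewrite /clp -(cl_nil hq_proof); apply: clE; exact: teq_r0. Qed.
Lemma clpDl x x' y : clp (x + x') y = clp x y + clp x' y.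
Proof. rewrite /clp -(cl_cat hq_proof); apply: clE; by apply: tens_addl. Qed.
Lemma clpDr x y y' : clp x (y + y') = clp x y + clp x y'.
Proof. rewrite /clp -(cl_cat hq_proof); apply: clE; by apply: tens_addr. Qed.
Lemma clp_bal a x y : clp (t a * x) y = clp x (s a * y).
Proof. rewrite /clp; apply: clE; by apply: (tens_bal (ractH t) (lactH s) (P:=fun _ => True)). Qed.
Lemma clp_act a x y : ractM (clp x y) a = clp x (t a * y).
Proof.
rewrite /ractM /clp; apply: clE; rewrite /actL.
apply: tens_trans (teqH_act Hb a (valcl _ _)) _; exact: tens_refl.
Qed.
Lemma clp_kill x y : I x -> clp x y = 0.
Proof. move=> hx; rewrite /clp -(cl_nil hq_proof); apply: clE; exact: tens_kill. Qed.
Lemma clpN y : clp (-1) y = - clp 1 y.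
Proof. by rewrite /clp -(cl_neg hq_proof). Qed.

Lemma cl_sum u z : teqM [:: (cl u, z)] [seq (clp q.1 q.2, z) | q <- u].
Proof.
elim: u => [|[a b] u IH] /=.
  by rewrite (cl_nil hq_proof); exact: tens_zero.
have -> : cl ((a, b) :: u) = clp a b + cl u by rewrite /clp -(cl_cat hq_proof).
apply: tens_trans (tens_addl _ _ _ z Logic.I Logic.I) _ => /=.
exact: teq_cons IH.
Qed.

Lemma D3 x u u' : teqZ (fun _ => False) u u' ->
  teqM [seq (clp x q.1, q.2) | q <- u] [seq (clp x q.1, q.2) | q <- u'].
Proof.
move=> h; rewrite -!(flatten_map1 (fun q : H * H => (clp x q.1, q.2))).
apply: (teq_transport (Phi := fun q : H * H => [:: (clp x q.1, q.2)])) h => /=.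
- by move=> n; rewrite clp_r0; exact: tens_zero.
- by move=> m m' n _ _; rewrite clpDr; apply: tens_addl.
- by move=> m n n' _; apply: tens_addr.
- move=> m a n _.
  have -> : clp x (ractH t m a) = ractM (clp x m) a by rewrite clp_act.
  by apply: tens_bal.
- by [].
Qed.

Definition phi (p : H * H) := [seq (clp p.1 q.1, q.2) | q <- D p.2].
Lemma D2 u u' : teqZ I u u' -> teqM (flatten (map phi u)) (flatten (map phi u')).
Proof.
move=> h; apply: (teq_transport (Phi := phi)) h; rewrite /phi /=.
- by move=> n; apply: teq_zero_map => q /=; exact: clp0.
- by move=> m m' n _ _; apply: teq_map_split => q /=; rewrite clpDl; apply: tens_addl.
- by move=> m n n' _; rewrite -map_cat; apply: D3; exact: D_add Hb n n'.
- move=> m a n _.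
  have -> : [seq (clp (ractH t m a) q.1, q.2) | q <- D n] =
    [seq (clp m q.1, q.2) | q <- [seq (s a * q.1, q.2) | q <- D n]].
    by rewrite -map_comp; apply: eq_map => q; rewrite /= /ractH clp_bal.
  apply: D3; apply: tens_sym; exact: D_s Hb a n.
- by move=> m n hm; apply: teq_zero_map => q /=; exact: clp_kill.
Qed.

Definition theta (p : H * H * H) := [:: (clp p.1.1 p.1.2, p.2)].
Lemma D1' u u' : teqH3 s t u u' ->
  teqM (flatten (map theta u)) (flatten (map theta u')).
Proof.
move=> h; apply: (teq3_transport (Phi := theta)) h; rewrite /theta /=.
- by move=> n l; rewrite clp0; exact: tens_zero.
- by move=> m m' n l _ _; rewrite clpDl; apply: tens_addl.
- by move=> m n n' l _; rewrite clpDr; apply: tens_addl.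
- by move=> m n l l' _; apply: tens_addr.
- by move=> m a n l _; rewrite /ractH /lactH clp_bal; exact: tens_refl.
- by move=> m n a l _; rewrite /ractH -clp_act; apply: tens_bal.
Qed.

Lemma stepD b : Bc b -> teqM [seq (f p.1, p.2) | p <- D b] [::].
Proof.
move=> hb.
have e1 : teqM [seq (f p.1, p.2) | p <- D b]
   ([seq (cl (D p.1), p.2) | p <- D b] ++ [seq (clp (-1) p.1, p.2) | p <- D b]).
  by apply: teq_map_split => p /=; rewrite /f (cl_cat hq_proof); apply: tens_addl.
apply: tens_trans e1 _.
have e2 : teqM [seq (cl (D p.1), p.2) | p <- D b]
  (flatten (map theta (flatten [seq [seq (q.1, q.2, p.2) | q <- D p.1] | p <- D b]))).
  have -> : flatten (map theta (flatten [seq [seq (q.1, q.2, p.2) | q <- D p.1] | p <- D b]))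
     = flatten [seq [seq (clp q.1 q.2, p.2) | q <- D p.1] | p <- D b].
    rewrite /theta (flatten_map1 (fun p : H * H * H => (clp p.1.1 p.1.2, p.2))).
    rewrite map_flatten -map_comp; congr flatten; apply: eq_map => p /=.
    by rewrite -map_comp.
  rewrite -(flatten_map1 (fun p : H * H => (cl (D p.1), p.2))).
  apply: teq_flat_pw => p; exact: cl_sum.
have e3 := tens_trans e2 (D1' (coass Hb b)).
apply: tens_trans (teq_catl _ e3) _.
have -> : flatten (map theta (flatten [seq [seq (p.1, q.1, q.2) | q <- D p.2] | p <- D b]))
   = flatten (map phi (D b)).
  rewrite /theta (flatten_map1 (fun p : H * H * H => (clp p.1.1 p.1.2, p.2))).
  rewrite map_flatten -map_comp; congr flatten; apply: eq_map => p /=.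
  by rewrite -map_comp.
apply: tens_trans (tens_cat (D2 hb) (tens_refl _ _ _ _ _)) _ => /=.
rewrite /phi cats0 /=.
apply: tens_trans (tens_sym (teq_map_split (f := fun p : H * H => (0, p.2)) (D b) _)) _.
  move=> p; rewrite clpN; apply: tens_trans (tens_zero _ _ _ _ _) _.
  apply: tens_sym; exact: teq_neg.
by apply: teq_zero_map.
Qed.

Local Notation J := (HBplus eps Bc).

Lemma J_in c : Bc c -> J (c - t (eps c)).
Proof.
move=> hc; apply: HBp_in; first exact: Bc_sub hc (Bc_t _).
by rewrite (epsB Hb) (eps_tA Hb) subrr.
Qed.

Definition Psi x n := [:: (x, n); (-1, s (eps x) * n)].

Lemma KPsi c n : Bc c -> teqZ J (Psi c n) [::].
Proof.
move=> hc; rewrite /Psi -cat1s.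
apply: tens_trans (teq_catl _ (Kc s n (J_in hc))) _ => /=; exact: teq_neg.
Qed.

Lemma PsiD x y n : teqZ J (Psi (x + y) n) (Psi x n ++ Psi y n).
Proof.
rewrite /Psi (epsD Hb) (sD Hb) mulrDl.
have h1 : teqZ J [:: (x + y, n)] [:: (x, n); (y, n)] by apply: tens_addl.
have h2 : teqZ J [:: (-1, s (eps x) * n + s (eps y) * n)]
  [:: (-1, s (eps x) * n); (-1, s (eps y) * n)] by apply: tens_addr.
apply: tens_trans (tens_cat h1 h2) _; apply: tens_perm.
apply/permP => q /=; move: (q _) (q _) (q _) (q _) => a1 a2 a3 a4; lia.
Qed.

Lemma Psir x n n' : teqZ J (Psi x (n + n')) (Psi x n ++ Psi x n').
Proof.
rewrite /Psi mulrDr.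
have h1 : teqZ J [:: (x, n + n')] [:: (x, n); (x, n')] by apply: tens_addr.
have h2 : teqZ J [:: (-1, s (eps x) * n + s (eps x) * n')]
  [:: (-1, s (eps x) * n); (-1, s (eps x) * n')] by apply: tens_addr.
apply: tens_trans (tens_cat h1 h2) _; apply: tens_perm.
apply/permP => q /=; move: (q _) (q _) (q _) (q _) => a1 a2 a3 a4; lia.
Qed.

Lemma Psibal a x n : teqZ J (Psi (t a * x) n) (Psi x (s a * n)).
Proof.
rewrite /Psi (eps_t Hb) (sM Hb) -mulrA -cat1s -[(x, s a * n) :: _]cat1s.
apply: teq_catl; by apply: (tens_bal (ractH t) (lactH s) (P:=fun _ => True)).
Qed.

Lemma Psicong x y n : Bc (x - y) -> teqZ J (Psi x n) (Psi y n).
Proof.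
move=> h; rewrite -[x in Psi x n](subrK y).
apply: tens_trans (PsiD _ _ _) _.
rewrite -[Psi y n]/([::] ++ Psi y n); exact: teq_catl (KPsi _ h).
Qed.

Definition g (y : M) : H := epsilon (inhabits 0) (fun x => y = f x).
Lemma gP y : Pf y -> y = f (g y).
Proof. by move=> hy; apply: (epsilon_spec (inhabits 0) (fun x => y = f x) hy). Qed.
Lemma g_f x : Bc (g (f x) - x).
Proof. by apply/f_zero; rewrite fB -gP ?subrr //; exists x. Qed.
Lemma PfD y y' : Pf y -> Pf y' -> Pf (y + y').
Proof. by move=> [x ->] [x' ->]; exists (x + x'); rewrite fD. Qed.

Lemma stepF b : Bc b ->
  tens_eq ractM (lactH s) Pf (fun _ => False) [seq (f p.1, p.2) | p <- D b] [::] ->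
  coinv s t D J b.
Proof.
move=> hb h.
have h2 : teqZ J (flatten (map (fun p : M * H => Psi (g p.1) p.2)
                   [seq (f p.1, p.2) | p <- D b])) [::].
  apply: (teq_transport (Phi := fun p : M * H => Psi (g p.1) p.2)) h => /=.
  - move=> n; apply: KPsi; apply/f_zero; rewrite -gP //; by exists 0; rewrite f0.
  - move=> m m' n hm hm'; apply: tens_trans (Psicong (y := g m + g m') _ _) (PsiD _ _ _).
    by apply/f_zero; rewrite fB fD -!gP ?subrr //; apply: PfD.
  - by move=> m n n' _; exact: Psir.
  - move=> m a n hm; apply: tens_trans (Psicong (y := t a * g m) _ _) (Psibal _ _ _).
    apply/f_zero; rewrite fB f_t -!gP ?subrr //.
    by case: Pf_sub => _ _; apply.
  - by [].
have h3 : teqZ J (flatten [seq Psi p.1 p.2 | p <- D b]) [::].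
  apply: tens_trans _ h2; rewrite -map_comp.
  apply: teq_flat_pw => p /=; apply: tens_sym; apply: Psicong; exact: g_f.
have h4 : perm_eq (flatten [seq Psi p.1 p.2 | p <- D b])
   (D b ++ [seq (-1, s (eps p.1) * p.2) | p <- D b]).
  elim: (D b) => [|[x y] u IH] //=; rewrite /Psi /=.
  rewrite perm_sym; apply: perm_trans (perm_mid _ _ _ _) _.
  by rewrite /= !perm_cons perm_sym.
have h5 : teqZ J (D b ++ [:: (-1, b)]) [::].
  apply: tens_trans _ h3; apply: tens_sym; apply: tens_trans (tens_perm _ _ _ _ h4) _.
  apply: teq_catr.
  have := teq_sumr (ractH t) (lactH s) J (-1) (fun p : H * H => s (eps p.1) * p.2) (D b).
  by rewrite (counitl Hb).
exact/teq_negcancel.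
Qed.

Lemma part1 (Hflat : flat_left (fun (a : A) (h : H) => s a * h)) x :
  Bc x <-> coinv s t D J x.
Proof.
split.
- move=> hx; have hD := stepD hx; apply: stepF hx _.
  apply: (Hflat _ ractM ractM_mod Pf Pf_sub); last exact: hD.
  by move=> p /mapP [q _ ->]; exists q.1.
- move=> hx; apply: (teq_mono _ hx) => m hm.
  apply: (HBp_sub (Z := I)) hm.
  + exact: I0.
  + exact: Iadd.
  + exact: Imul.
  + move=> b hb e; apply: (Kerl Hb) hb e.
    * exact: I0.
    * exact: Isub.
    * by move=> a y; apply: Imul.
Qed.
End Part1.

Theorem theorem2p9 (k : fieldType) (A H : algType k)
  (s t : A -> H) (D : H -> seq (H * H)) (eps : H -> A) :
  left_bialgebroid s t D eps ->
  flat_left (fun (a : A) (h : H) => s a * h) ->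
  (forall I : H -> Prop, left_ideal_coideal s t D eps I ->
     forall x : H, coinv s t D I x <->
                   coinv s t D (HBplus eps (coinv s t D I)) x) /\
  (forall (B : H -> Prop) (delta : H -> seq (H * H)),
     comodule_subring s t D eps B delta ->
     forall x : H, HBplus eps B x <->
                   HBplus eps (coinv s t D (HBplus eps B)) x).
Proof.
move=> Hb Hflat; split.
- by move=> I HI x; apply: (part1 Hb HI Hflat).
- exact: (part2 Hb).
Qed.
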